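(* Let $H$ and $G$ be non-abelian simple groups and let $j\colon\mathrm{Aut}(H)\to\mathrm{Aut}(G)$ be an injective homomorphism with $j(\mathrm{Inn}(H))\subseteq\mathrm{Inn}(G)$. Assume $\mathrm{Aut}(G)$ is co-hopfian and $\mathrm{Out}(G)$ is hyperabelian. Let $N=j^{-1}(\mathrm{Inn}(G))$ (a normal subgroup of $\mathrm{Aut}(H)$ containing $\mathrm{Inn}(H)$), let $k\colon\mathrm{Out}(H)\to\mathrm{Out}(G)$ be the homomorphism induced by $j$, and let $\pi\colon\mathrm{Out}(H)=\mathrm{Aut}(H)/\mathrm{Inn}(H)\to\mathrm{Aut}(H)/N$ be the canonical projection. Then $j$ is a localization if and only if the following four conditions hold: (a) for every injective homomorphism $\kappa\colon\mathrm{Aut}(H)\to\mathrm{Aut}(G)$ there exists $\theta\in\mathrm{Aut}(\mathrm{Aut}(G))$ with $\theta\circ j=\kappa$ (i.e. $\mathrm{Aut}(\mathrm{Aut}(G))$ acts transitively, by composition, on the set of monomorphisms $\mathrm{Aut}(H)\to\mathrm{Aut}(G)$); (b) the only $\theta\in\mathrm{Aut}(\mathrm{Aut}(G))$ with $\theta\circ j=j$ is the identity; (c) for every homomorphism $\varphi'\colon\mathrm{Aut}(H)/N\to\mathrm{Aut}(G)$ there exists a unique homomorphism $\psi'\colon\mathrm{Out}(G)\to\mathrm{Aut}(G)$ with $\psi'\circ k=\varphi'\circ\pi$; (d) every homomorphism $\varphi\colon\mathrm{Aut}(H)\to\mathrm{Aut}(G)$ with $\mathrm{Inn}(H)\subseteq\ker\varphi$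 satisfies $N\subseteq\ker\varphi$.
   Context: A group homomorphism $i\colon X\to Y$ is a localization if for every homomorphism $\varphi\colon X\to Y$ there exists a unique homomorphism $\psi\colon Y\to Y$ with $\psi\circ i=\varphi$. A group is co-hopfian if every injective endomorphism is an automorphism. A group $A$ is hyperabelian if every non-trivial quotient of $A$ has a non-trivial abelian normal subgroup. $\mathrm{Out}(X)=\mathrm{Aut}(X)/\mathrm{Inn}(X)$. *)

(* Defs.v *)
From Stdlib Require Import Setoid FunctionalExtensionality ProofIrrelevance.

Set Implicit Arguments.

Record Group := {
  carrier :> Type;
  gmul : carrier -> carrier -> carrier;
  ginv : carrier -> carrier;
  gone : carrier;
  gassoc : forall x y z, gmul x (gmul y z) = gmul (gmul x y) z;
  gmul1l : forall x, gmul gone x = x;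
  gmulVl : forall x, gmul (ginv x) x = gone
}.

Arguments gmul {g}.
Arguments ginv {g}.
Arguments gone {g}.

Definition is_hom {X Y : Group} (f : X -> Y) : Prop :=
  forall x y, f (gmul x y) = gmul (f x) (f y).

Definition inj {A B : Type} (f : A -> B) : Prop := forall x y, f x = f y -> x = y.
Definition surj {A B : Type} (f : A -> B) : Prop := forall y, exists x, f x = y.

Definition normal_sub (X : Group) (P : X -> Prop) : Prop :=
  P gone /\ (forall x y, P x -> P y -> P (gmul x y)) /\ (forall x, P x -> P (ginv x)) /\
  (forall g x, P x -> P (gmul (gmul g x) (ginv g))).

Definition nontrivial (X : Group) : Prop := exists x : X, x <> gone.

Definition simple_group (X : Group) : Prop :=
  nontrivial X /\
  forall P, normal_sub X P -> (forall x, P x -> x = gone) \/ (forall x, P x).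

Definition nonabelian (X : Group) : Prop := exists x y : X, gmul x y <> gmul y x.

Definition localization {X Y : Group} (i : X -> Y) : Prop :=
  forall phi : X -> Y, is_hom phi ->
    exists psi : Y -> Y, is_hom psi /\ (forall x, psi (i x) = phi x) /\
      forall psi' : Y -> Y, is_hom psi' -> (forall x, psi' (i x) = phi x) ->
        forall y, psi' y = psi y.

Definition cohopfian (X : Group) : Prop :=
  forall f : X -> X, is_hom f -> inj f -> surj f.

Definition hyperabelian (A : Group) : Prop :=
  forall (B : Group) (p : A -> B), is_hom p -> surj p -> nontrivial B ->
    exists P : B -> Prop, normal_sub B P /\ (exists b, P b /\ b <> gone) /\
      (forall x y, P x -> P y -> gmul x y = gmul y x).

Definition quotient_map {X Q : Group} (q : X -> Q) (N : X -> Prop) : Prop :=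
  is_hom q /\ surj q /\ forall x, q x = gone <-> N x.

Section Aut.
Variable X : Group.

Definition aut_prop (p : (X -> X) * (X -> X)) : Prop :=
  is_hom (fst p) /\ (forall x, snd p (fst p x) = x) /\ (forall x, fst p (snd p x) = x).

Definition aut_car := { p : (X -> X) * (X -> X) | aut_prop p }.

Definition autf (a : aut_car) : X -> X := fst (proj1_sig a).

Lemma aut_eq (a b : aut_car) : (forall x, autf a x = autf b x) -> a = b.
Proof.
  destruct a as [[f g] [hf [gf fg]]], b as [[f' g'] [hf' [gf' fg']]].
  unfold autf; simpl in *. intro E.
  assert (Ef : f = f') by (apply functional_extensionality; exact E).
  subst f'.
  assert (Eg : g = g').
  { apply functional_extensionality; intro x.
    rewrite <- (gf' (g x)). rewrite fg. reflexivity. }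
  subst g'.
  f_equal. apply proof_irrelevance.
Qed.

Lemma hom_inv (f g : X -> X) : is_hom f -> (forall x, g (f x) = x) ->
  (forall x, f (g x) = x) -> is_hom g.
Proof.
  intros hf gf fg x y.
  rewrite <- (fg x) at 1. rewrite <- (fg y) at 1. rewrite <- hf. apply gf.
Qed.

Definition aut_mul (a b : aut_car) : aut_car.
Proof.
  destruct a as [[f g] [hf [gf fg]]], b as [[f' g'] [hf' [gf' fg']]].
  exists (fun x => f (f' x), fun x => g' (g x)).
  split; [|split]; simpl.
  - intros x y. rewrite hf', hf. reflexivity.
  - intro x. rewrite gf, gf'. reflexivity.
  - intro x. rewrite fg', fg. reflexivity.
Defined.

Definition aut_inv (a : aut_car) : aut_car.
Proof.
  destruct a as [[f g] [hf [gf fg]]].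
  exists (g, f). split; [|split]; simpl.
  - exact (@hom_inv f g hf gf fg).
  - exact fg.
  - exact gf.
Defined.

Definition aut_one : aut_car.
Proof.
  exists (fun x => x, fun x => x). split; [|split]; simpl; auto.
  intros x y; reflexivity.
Defined.

Lemma aut_assoc (a b c : aut_car) :
  aut_mul a (aut_mul b c) = aut_mul (aut_mul a b) c.
Proof.
  apply aut_eq; intro x.
  destruct a as [[? ?] [? [? ?]]], b as [[? ?] [? [? ?]]], c as [[? ?] [? [? ?]]].
  reflexivity.
Qed.

Lemma aut_mul1l (a : aut_car) : aut_mul aut_one a = a.
Proof.
  apply aut_eq; intro x. destruct a as [[? ?] [? [? ?]]]. reflexivity.
Qed.

Lemma aut_mulVl (a : aut_car) : aut_mul (aut_inv a) a = aut_one.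
Proof.
  apply aut_eq; intro x. destruct a as [[? ?] [? [? ?]]]. unfold autf; simpl. auto.
Qed.

Definition Aut : Group :=
  @Build_Group aut_car aut_mul aut_inv aut_one aut_assoc aut_mul1l aut_mulVl.

Definition inner (a : Aut) : Prop :=
  exists g : X, forall x, autf a x = gmul (gmul g x) (ginv g).

End Aut.

Arguments autf {X}.
Arguments inner {X}.

(* Main.v *)
Require Import Defs.
From Stdlib Require Import Classical ClassicalEpsilon FunctionalExtensionality ProofIrrelevance.

Arguments gassoc {g}.
Arguments gmul1l {g}.
Arguments gmulVl {g}.

Section GL.
Variable X : Group.
Lemma mulgV (x : X) : gmul x (ginv x) = gone.
Proof.
  transitivity (gmul (gmul (ginv (ginv x)) (ginv x)) (gmul x (ginv x))).
  { rewrite gmulVl, gmul1l. reflexivity. }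
  rewrite <- gassoc. rewrite (gassoc (ginv x) x (ginv x)), gmulVl, gmul1l. apply gmulVl.
Qed.
Lemma mulg1 (x : X) : gmul x gone = x.
Proof. rewrite <- (gmulVl x), gassoc, mulgV, gmul1l. reflexivity. Qed.
Lemma mulg_cancel_l (a x y : X) : gmul a x = gmul a y -> x = y.
Proof. intro E. rewrite <- (gmul1l x), <- (gmul1l y), <- (gmulVl a), <- !gassoc, E. reflexivity. Qed.
Lemma mulg_cancel_r (a x y : X) : gmul x a = gmul y a -> x = y.
Proof. intro E. rewrite <- (mulg1 x), <- (mulg1 y), <- (mulgV a), !gassoc, E. reflexivity. Qed.
Lemma inv_uniq (x y : X) : gmul x y = gone -> x = ginv y.
Proof. intro E. apply (mulg_cancel_r y). rewrite gmulVl. exact E. Qed.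
Lemma invinv (x : X) : ginv (ginv x) = x.
Proof. symmetry. apply inv_uniq. apply mulgV. Qed.
Lemma invM (x y : X) : ginv (gmul x y) = gmul (ginv y) (ginv x).
Proof. symmetry. apply inv_uniq. rewrite <- gassoc, (gassoc (ginv x)), gmulVl, gmul1l. apply gmulVl. Qed.
Lemma mulKg (g z : X) : gmul (ginv g) (gmul g z) = z.
Proof. rewrite gassoc, gmulVl, gmul1l. reflexivity. Qed.
Lemma mulVKg (g z : X) : gmul g (gmul (ginv g) z) = z.
Proof. rewrite gassoc, mulgV, gmul1l. reflexivity. Qed.
End GL.
Arguments mulgV {X}.
Arguments mulg1 {X}.
Arguments mulg_cancel_l {X}.
Arguments mulg_cancel_r {X}.
Arguments inv_uniq {X}.
Arguments invinv {X}.
Arguments invM {X}.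
Arguments mulKg {X}.
Arguments mulVKg {X}.


Ltac gsimpl := repeat (rewrite <- ?gassoc; rewrite ?mulKg, ?mulVKg, ?gmulVl, ?mulgV, ?mulg1, ?gmul1l, ?invinv, ?invM).

Section Hom.
Variables X Y : Group.
Variable f : X -> Y.
Hypothesis hf : is_hom f.
Lemma hom_one : f gone = gone.
Proof. apply (mulg_cancel_l (f gone)). rewrite <- hf, gmul1l, mulg1. reflexivity. Qed.
Lemma hom_inv x : f (ginv x) = ginv (f x).
Proof. apply inv_uniq. rewrite <- hf, gmulVl. apply hom_one. Qed.
Lemma ker_inj : (forall x, f x = gone -> x = gone) -> inj f.
Proof.
  intros K x y E.
  assert (E2 : f (gmul (ginv x) y) = gone) by (rewrite hf, hom_inv, E, gmulVl; reflexivity).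
  apply K in E2. apply (mulg_cancel_l (ginv x)). rewrite E2, gmulVl. reflexivity.
Qed.
Lemma ker_normal : normal_sub X (fun x => f x = gone).
Proof.
  split; [|split; [|split]].
  - apply hom_one.
  - intros x y A B. rewrite hf, A, B. apply gmul1l.
  - intros x A. rewrite hom_inv, A. symmetry. apply inv_uniq. apply gmul1l.
  - intros g x A. rewrite !hf, A, mulg1, <- hf, mulgV. apply hom_one.
Qed.
End Hom.
Arguments hom_one {X Y f}.
Arguments hom_inv {X Y f}.
Arguments ker_inj {X Y f}.
Arguments ker_normal {X Y f}.


Lemma autf_mul (X : Group) (a b : Aut X) x : autf (gmul a b) x = autf a (autf b x).
Proof. destruct a as [[f g] [? [? ?]]], b as [[f' g'] [? [? ?]]]. reflexivity. Qed.
Lemma autf_invl (X : Group) (a : Aut X) x : autf (ginv a) (autf a x) = x.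
Proof. destruct a as [[f g] [? [? ?]]]. unfold autf; simpl in *. auto. Qed.
Lemma autf_hom (X : Group) (a : Aut X) : is_hom (autf a).
Proof. destruct a as [p Hp]. exact (proj1 Hp). Qed.

Lemma cj_prop (X : Group) (g : X) :
  aut_prop X (fun x => gmul (gmul g x) (ginv g), fun x => gmul (gmul (ginv g) x) g).
Proof.
  split; [|split]; simpl.
  - intros x y. gsimpl. reflexivity.
  - intro x. gsimpl. reflexivity.
  - intro x. gsimpl. reflexivity.
Qed.
Definition cj (X : Group) (g : X) : Aut X := exist _ _ (cj_prop X g).
Arguments cj {X}.
Lemma autf_cj (X : Group) (g x : X) : autf (cj g) x = gmul (gmul g x) (ginv g).
Proof. reflexivity. Qed.

Lemma cj_mul (X : Group) (a b : X) : cj (gmul a b) = gmul (cj a) (cj b).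
Proof. apply aut_eq. intro x. rewrite autf_mul. unfold autf; simpl. gsimpl. reflexivity. Qed.
Lemma cj_one (X : Group) : cj (gone : X) = gone.
Proof. apply aut_eq. intro x. unfold autf; simpl. rewrite <- (inv_uniq _ _ (gmul1l (gone : X))).
  gsimpl. reflexivity. Qed.
Lemma cj_inv (X : Group) (a : X) : cj (ginv a) = ginv (cj a).
Proof. apply inv_uniq. rewrite <- cj_mul, gmulVl. apply cj_one. Qed.

Lemma min_normal (X : Group) (HsX : simple_group X) (K : Aut X -> Prop)
  (HK : normal_sub (Aut X) K) (k : Aut X) (Kk : K k) (kne : k <> gone) :
  forall a, inner a -> K a.
Proof.
  destruct HK as [K1 [Kmul [Kinv Kconj]]].
  assert (Hx : exists x, autf k x <> x).
  { apply NNPP; intro Hn; apply kne; apply aut_eq; intro x.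
    apply NNPP; intro; apply Hn; exists x; auto. }
  destruct Hx as [x Hx].
  set (y := gmul x (ginv (autf k x))).
  set (m := gmul (gmul (gmul (cj x) k) (ginv (cj x))) (ginv k)).
  assert (Km : K m) by (apply Kmul; [apply Kconj; exact Kk | apply Kinv; exact Kk]).
  assert (Em : m = cj y).
  { apply aut_eq; intro z. unfold m. rewrite <- cj_inv, !autf_mul.
    set (w := autf (ginv k) z).
    assert (Hw : autf k w = z).
    { unfold w. rewrite <- (invinv k) at 1. apply autf_invl. }
    unfold autf at 1 3; simpl. fold (autf k w). pose proof (autf_hom _ k) as hk.
    rewrite !hk, Hw, !(hom_inv hk). unfold y. rewrite autf_cj. gsimpl. reflexivity. }
  set (P := fun z : X => K (cj z)).
  assert (HP : normal_sub X P).
  { split; [|split; [|split]]; unfold P.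
    - rewrite cj_one. exact K1.
    - intros a b A B. rewrite cj_mul. auto.
    - intros a A. rewrite cj_inv. auto.
    - intros g a A. rewrite !cj_mul, cj_inv. auto. }
  destruct HsX as [_ HsX]. destruct (HsX P HP) as [Hall | Hall].
  - exfalso. assert (Py : P y) by (unfold P; rewrite <- Em; exact Km).
    apply Hall in Py. unfold y in Py. apply inv_uniq in Py. rewrite invinv in Py. auto.
  - intros a [g Hg]. assert (a = cj g) by (apply aut_eq; exact Hg). subst a. apply Hall.
Qed.
Arguments min_normal {X} HsX {K} HK {k} Kk kne.


Lemma kill_inner (X Y : Group) (HsX : simple_group X) (f : Aut X -> Y) (hf : is_hom f)
  (k : Aut X) (hk : f k = gone) (kne : k <> gone) : forall a, inner a -> f a = gone.
Proof. exact (min_normal HsX (ker_normal hf) hk kne). Qed.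
Arguments kill_inner {X Y} HsX {f} hf {k} hk kne.


Lemma inj_psi (X Y : Group) (HsX : simple_group X) (psi : Aut X -> Y) (hpsi : is_hom psi)
  (b : Aut X) (hb : inner b) (hpb : psi b <> gone) : inj psi.
Proof.
  apply (ker_inj hpsi). intros x Hx. apply NNPP; intro ne. apply hpb.
  exact (kill_inner HsX hpsi Hx ne b hb).
Qed.
Arguments inj_psi {X Y} HsX {psi} hpsi {b} hb hpb.


Lemma inner_nontriv (X : Group) (Hn : nonabelian X) : exists a : Aut X, inner a /\ a <> gone.
Proof.
  destruct Hn as [x [y Hxy]]. exists (cj x). split.
  - exists x. reflexivity.
  - intro E. apply Hxy. assert (E2 := f_equal (fun a => autf a y) E). simpl in E2.
    unfold autf in E2; simpl in E2.
    apply (mulg_cancel_r (ginv x)). rewrite E2. gsimpl. reflexivity.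
Qed.
Arguments inner_nontriv {X} Hn.


Lemma factor {X Q Y : Group} (q : X -> Q) (P : X -> Prop) (Hq : quotient_map q P)
  (f : X -> Y) (hf : is_hom f) (hP : forall x, P x -> f x = gone) :
  exists f' : Q -> Y, is_hom f' /\ forall x, f' (q x) = f x.
Proof.
  destruct Hq as [hq [sq kq]].
  assert (wd : forall x x', q x = q x' -> f x = f x').
  { intros x x' E.
    assert (E1 : q (gmul (ginv x) x') = gone) by (rewrite hq, (hom_inv hq), E, gmulVl; reflexivity).
    apply kq, hP in E1. rewrite hf, (hom_inv hf) in E1.
    apply (mulg_cancel_l (ginv (f x))). rewrite E1, gmulVl. reflexivity. }
  pose (sel := fun y => proj1_sig (constructive_indefinite_description _ (sq y))).
  assert (spec : forall y, q (sel y) = y) by (intro y; exact (proj2_sig (constructive_indefinite_description _ (sq y)))).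
  exists (fun y => f (sel y)). split.
  - intros y1 y2. rewrite <- hf. apply wd. rewrite hq, !spec. reflexivity.
  - intro x. apply wd. apply spec.
Qed.
Arguments factor {X Q Y q P} Hq {f} hf hP.


Lemma mk_aut (X : Group) (f : X -> X) (hf : is_hom f) (fi : inj f) (fs : surj f) :
  exists th : Aut X, forall x, autf th x = f x.
Proof.
  pose (g := fun y => proj1_sig (constructive_indefinite_description _ (fs y))).
  assert (spec : forall y, f (g y) = y) by (intro y; exact (proj2_sig (constructive_indefinite_description _ (fs y)))).
  assert (pr : aut_prop X (f, g)).
  { split; [|split]; simpl.
    - exact hf.
    - intro x. apply fi. apply spec.
    - exact spec. }
  exists (exist _ _ pr). reflexivity.
Qed.
Arguments mk_aut {X f} hf fi fs.


Theorem theorem3p3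
  (H G : Group)
  (HsH : simple_group H) (HnH : nonabelian H)
  (HsG : simple_group G) (HnG : nonabelian G)
  (j : Aut H -> Aut G) (Hj : is_hom j) (Hjinj : inj j)
  (HjInn : forall a : Aut H, inner a -> inner (j a))
  (Hcoh : cohopfian (Aut G))
  (* Out(H), Out(G) and Aut(H)/N, each given by a quotient map *)
  (OutH : Group) (qH : Aut H -> OutH) (HqH : quotient_map qH inner)
  (OutG : Group) (qG : Aut G -> OutG) (HqG : quotient_map qG inner)
  (Q : Group) (qN : Aut H -> Q) (HqN : quotient_map qN (fun a => inner (j a)))
  (Hhyp : hyperabelian OutG)
  (* k : Out(H) -> Out(G) induced by j *)
  (k : OutH -> OutG) (Hk : is_hom k) (Hkj : forall a, k (qH a) = qG (j a))
  (* pi : Out(H) -> Aut(H)/N canonical projection *)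
  (pi : OutH -> Q) (Hpi : is_hom pi) (Hpiq : forall a, pi (qH a) = qN a) :
  localization j <->
  ((* (a) *)
   (forall kappa : Aut H -> Aut G, is_hom kappa -> inj kappa ->
      exists theta : Aut (Aut G), forall a, autf theta (j a) = kappa a) /\
   (* (b) *)
   (forall theta : Aut (Aut G), (forall a, autf theta (j a) = j a) ->
      theta = gone) /\
   (* (c) *)
   (forall phi' : Q -> Aut G, is_hom phi' ->
      exists psi' : OutG -> Aut G, is_hom psi' /\
        (forall o, psi' (k o) = phi' (pi o)) /\
        (forall psi'' : OutG -> Aut G, is_hom psi'' ->
           (forall o, psi'' (k o) = phi' (pi o)) -> forall y, psi'' y = psi' y)) /\
   (* (d) *)
   (forall phi : Aut H -> Aut G, is_hom phi ->
      (forall a, inner a -> phi a = gone) ->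
      forall a, inner (j a) -> phi a = gone)).
Proof.
  destruct (inner_nontriv HnH) as [a0 [Ha0 Ha0ne]].
  assert (Hja0 : inner (j a0)) by auto.
  assert (Hja0ne : j a0 <> gone).
  { intro E. apply Ha0ne. apply Hjinj. rewrite E, (hom_one Hj). reflexivity. }
  assert (Kill : forall (Y : Group) (psi : Aut G -> Y), is_hom psi -> psi (j a0) = gone ->
            forall b, inner b -> psi b = gone).
  { intros Y psi hpsi E b hb. exact (kill_inner HsG hpsi E Hja0ne b hb). }
  pose proof HqG as [hqG [sqG kqG]].
  pose proof HqH as [hqH [sqH kqH]].
  split.
  - intro Hloc. split; [|split; [|split]].
    + intros kappa hk hkinj.
      destruct (Hloc kappa hk) as [psi [hpsi [hpj _]]].
      assert (ipsi : inj psi).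
      { apply (inj_psi HsG hpsi Hja0). rewrite hpj. intro E. apply Ha0ne. apply hkinj.
        rewrite E, (hom_one hk). reflexivity. }
      destruct (mk_aut hpsi ipsi (Hcoh psi hpsi ipsi)) as [th Hth].
      exists th. intro a. rewrite Hth. apply hpj.
    + intros th Hth.
      destruct (Hloc j Hj) as [psi [hpsi [hpj Hu]]].
      apply aut_eq. intro y.
      rewrite (Hu (autf th) (autf_hom _ th) Hth y). symmetry.
      apply (Hu (fun x => x)); [intros ? ?; reflexivity | reflexivity].
    + intros phi' hphi'.
      assert (hphi : is_hom (fun a => phi' (qN a))).
      { intros x y. rewrite (proj1 HqN). apply hphi'. }
      destruct (Hloc _ hphi) as [psi [hpsi [hpj Hu]]].
      assert (Hk0 : psi (j a0) = gone).
      { rewrite hpj. rewrite (proj2 (proj2 (proj2 HqN) a0) Hja0). apply (hom_one hphi'). }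
      destruct (factor HqG hpsi (Kill _ psi hpsi Hk0)) as [psi' [hpsi' Hpsi']].
      exists psi'. split; [exact hpsi'|split].
      * intro o. destruct (sqH o) as [a <-]. rewrite Hkj, Hpsi', hpj, Hpiq. reflexivity.
      * intros psi'' hpsi'' H'' y. destruct (sqG y) as [g <-]. rewrite Hpsi'.
        apply (Hu (fun g => psi'' (qG g))).
        -- intros x z. rewrite hqG. apply hpsi''.
        -- intro a. rewrite <- Hkj, H'', Hpiq. reflexivity.
    + intros phi hphi Hinn a Ha.
      destruct (Hloc phi hphi) as [psi [hpsi [hpj _]]].
      rewrite <- hpj. apply (Kill _ psi hpsi); [rewrite hpj; apply Hinn; exact Ha0 | exact Ha].
  - intros [Ha [Hb [Hc Hd]]] phi hphi.
    destruct (classic (forall a, inner a -> phi a = gone)) as [Hki | Hnk].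
    + assert (HN := Hd phi hphi Hki).
      destruct (factor HqN hphi HN) as [phi' [hphi' Hphi']].
      destruct (Hc phi' hphi') as [psi' [hpsi' [Hpk Hu]]].
      exists (fun g => psi' (qG g)). split; [|split].
      * intros x y. rewrite hqG. apply hpsi'.
      * intro a. rewrite <- Hkj, Hpk, Hpiq, Hphi'. reflexivity.
      * intros psi2 hpsi2 Hp2 y.
        assert (E0 : psi2 (j a0) = gone) by (rewrite Hp2; apply Hki; exact Ha0).
        destruct (factor HqG hpsi2 (Kill _ _ hpsi2 E0)) as [chi [hchi Hchi]].
        rewrite <- Hchi. apply Hu; [exact hchi|]. intro o. destruct (sqH o) as [a <-].
        rewrite Hkj, Hchi, Hp2, Hpiq, Hphi'. reflexivity.
    + assert (Hex : exists b, inner b /\ phi b <> gone).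
      { apply NNPP; intro Hn; apply Hnk; intros b hb; apply NNPP; intro; apply Hn; eauto. }
      destruct Hex as [b [hb hpb]].
      pose proof (inj_psi HsH hphi hb hpb) as iphi.
      destruct (Ha phi hphi iphi) as [th Hth].
      exists (autf th). split; [apply autf_hom | split; [exact Hth|]].
      intros psi2 hpsi2 Hp2 y.
      assert (ip2 : inj psi2).
      { apply (inj_psi HsG hpsi2 Hja0). rewrite Hp2. intro E. apply Ha0ne. apply iphi.
        rewrite E, (hom_one hphi). reflexivity. }
      destruct (mk_aut hpsi2 ip2 (Hcoh _ hpsi2 ip2)) as [th2 Hth2].
      assert (E : gmul (ginv th) th2 = gone).
      { apply Hb. intro a. rewrite autf_mul, Hth2, Hp2, <- Hth. apply autf_invl. }
      assert (th2 = th).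
      { apply (mulg_cancel_l (ginv th)). rewrite E, gmulVl. reflexivity. }
      subst th2. rewrite <- Hth2. reflexivity.
Qed.
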